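(* Let $X$ and $Y$ be infinite metrizable compact spaces and let $Z$ be a metrizable space containing a homeomorphic copy of $\mathbb R$. Then a compact space $K$ embeds homeomorphically into $S(X\times Y,Z)$ if and only if $K$ is metrizable.
   Context: All compact spaces are assumed Hausdorff. For topological spaces $X,Y,Z$, a function $f:X\times Y\to Z$ is separately continuous if $y\mapsto f(x,y)$ is continuous for every $x\in X$ and $x\mapsto f(x,y)$ is continuous for every $y\in Y$. $S(X\times Y,Z)$ denotes the set of all separately continuous functions $X\times Y\to Z$. For $p=(a,b)\in X\times Y$, the cross of $p$ is $\mathrm{cr}\{p\}=(\{a\}\times Y)\cup(X\times\{b\})$. For $X,Y$ compact and $Z$ metrizable with a compatible metric $d$, $S(X\times Y,Z)$ carries the topology generated by the family of extended pseudometrics $d_c(s,t)=\sup_{p\in\mathrm{cr}\{c\}} d(s(p),t(p))$, $c\in X\times Y$ (the cross-uniform topology); it coincides with the cross-open topology, generated by the subbase of sets $\{s: s(A)\subseteq W\}$ with $W$ open in $Z$ and $A=\overline{G}\cap C$, where $C=\mathrm{cr}\{p\}$ for some $p$ and $G$ is open in $C$. *)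

(* Defs.v *)
From HB Require Import structures.
From mathcomp Require Import all_boot all_order all_algebra.
From mathcomp Require Import all_classical all_reals all_analysis.
Set Implicit Arguments. Unset Strict Implicit. Unset Printing Implicit Defensive.
Import Order.TTheory GRing.Theory Num.Theory.
Local Open Scope classical_set_scope.
Local Open Scope ring_scope.

Definition metrizable (R : realType) (T : topologicalType) : Prop :=
  exists d : T -> T -> R,
    [/\ (forall x y, 0 <= d x y),
        (forall x y, d x y = 0 <-> x = y),
        (forall x y, d x y = d y x),
        (forall x y z, d x z <= d x y + d y z) &
        (forall x, nbhs x = filter_from [set e | 0 < e] (fun e => [set y | d x y < e]))].

Definition embedding (A B : topologicalType) (f : A -> B) : Prop :=
  [/\ injective f, continuous f &
      forall U : set A, open U -> exists V : set B, open V /\ f @` U = range f `&` V].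

Definition embeds_into (A B : topologicalType) (S : set B) : Prop :=
  exists f : A -> B, (forall a, S (f a)) /\ embedding f.

Definition cross (X Y : Type) (c : X * Y) : set (X * Y) :=
  [set p | p.1 = c.1 \/ p.2 = c.2].

Definition crosses (X Y : Type) : set (X * Y) -> Prop :=
  fun A => exists c : X * Y, A = cross c.

Definition sep_continuous (X Y Z : topologicalType) (s : X * Y -> Z) : Prop :=
  (forall x : X, continuous (fun y : Y => s (x, y))) /\
  (forall y : Y, continuous (fun x : X => s (x, y))).

(* The function space X*Y -> Z with the cross-uniform topology: uniform
   convergence (w.r.t. the metric of Z) on every cross. *)
Definition cross_uniform (X Y : Type) (Z : uniformType) :=
  {family @crosses X Y, (X * Y) -> Z}.

Definition Ssep (X Y : topologicalType) (Z : uniformType) : set (cross_uniform X Y Z) :=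
  fun s => @sep_continuous X Y Z s.
Arguments cross_uniform : clear implicits.
Arguments Ssep : clear implicits.
Arguments metrizable : clear implicits.

(* Main.v *)
Require Import Defs.
From HB Require Import structures.
From mathcomp Require Import all_boot all_order all_algebra.
From mathcomp Require Import all_classical all_reals all_analysis.
Import numFieldTopology.Exports.
Local Open Scope classical_set_scope.
Import Order.TTheory GRing.Theory Num.Theory.
Local Open Scope ring_scope.
Set Implicit Arguments. Unset Strict Implicit. Unset Printing Implicit Defensive.
Definition ptd_of (T : topologicalType) (x : T) : Type := T.
HB.instance Definition _ (T : topologicalType) (x : T) := Topological.copy (@ptd_of T x) T.
HB.instance Definition _ (T : topologicalType) (x : T) := isPointed.Build (@ptd_of T x) x.
Section Met.
Context {R : realType} {T : topologicalType} (d : T -> T -> R).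
Hypothesis (d0 : forall x y, 0 <= d x y) (dxx : forall x y, d x y = 0 <-> x = y)
  (dsym : forall x y, d x y = d y x) (dtri : forall x y z, d x z <= d x y + d y z)
  (dnb : forall x, nbhs x = filter_from [set e | 0 < e] (fun e => [set y | d x y < e])).

Lemma mball_nbhs x e : 0 < e -> nbhs x [set y | d x y < e].
Proof. by move=> e0; rewrite dnb; exists e. Qed.

Lemma nbhs_mball x A : nbhs x A -> exists2 e, 0 < e & [set y | d x y < e] `<=` A.
Proof. by rewrite dnb => -[e e0 sA]; exists e. Qed.

Lemma mball_open x e : open [set y | d x y < e].
Proof.
rewrite openE => y /= dxy; rewrite /interior /=.
have e0 : 0 < e - d x y by rewrite subr_gt0.
apply: (filterS _ (mball_nbhs y e0)) => z /= dz.
by apply: le_lt_trans (dtri x y z) _; rewrite -ltrBrDl.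
Qed.

Lemma dxx0 x : d x x = 0. Proof. exact/dxx. Qed.

Lemma dense_seq (x0 : T) : compact [set: T] ->
  exists a : nat -> T, forall x e, 0 < e -> exists n, d x (a n) < e.
Proof.
move=> cT.
have hs : forall m : nat, exists s : seq T, forall x, exists2 y, y \in s & d x y < m.+1%:R^-1.
  move=> m.
  have h := @compact_cover (ptd_of x0).
  have : @cover_compact (ptd_of x0) setT by rewrite -h.
  move=> /(_ T setT (fun y => [set z | d y z < m.+1%:R^-1])).
  case.
  - by move=> i _; apply: mball_open.
  - move=> x _; exists x => //=; by rewrite dxx0 invr_gt0.
  move=> D' _ cov; exists (finmap.enum_fset D') => x.
  have [y /= yD dyx] := cov x I.
  by exists y => //; rewrite dsym.
have [s hsP] := choice hs.
pose a n := if (unpickle n : option (nat * nat)) is Some (m, j) then nth x0 (s m) j else x0.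
exists a => x e e0.
pose m := Num.truncn e^-1.
have [y ys dxy] := hsP m x.
exists (pickle (m, index y (s m))); rewrite /a pickleK nth_index //.
apply: (lt_trans dxy); rewrite -[e]invrK ltf_pV2 ?posrE ?invr_gt0 //.
exact: truncnS_gt.
Qed.
End Met.
From mathcomp Require Import lra.
Lemma min_tri {R : realType} (w a b c : R) : 0 <= w -> 0 <= b -> 0 <= c -> a <= b + c ->
  Order.min w a <= Order.min w b + Order.min w c.
Proof.
move=> w0 b0 c0 abc.
rewrite /Order.min.
have [hb|hb] := ltP w b; have [hc|hc] := ltP w c; have [ha|ha] := ltP w a.
all: try lra.
Qed.

Section Crit.
Context {R : realType} {K : topologicalType} {I : countType} (rho : I -> K -> K -> R).
Hypotheses (cK : compact [set: K]) (hK : hausdorff_space K)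
 (r0 : forall i x y, 0 <= rho i x y) (rxx : forall i x, rho i x x = 0)
 (rsym : forall i x y, rho i x y = rho i y x)
 (rtri : forall i x y z, rho i x z <= rho i x y + rho i y z)
 (rnb : forall i x e, 0 < e -> nbhs x [set y | rho i x y < e])
 (rsep : forall x y, (forall i, rho i x y = 0) -> x = y).

Let w (i : I) : R := (pickle i).+1%:R^-1.
Let c i x y := Order.min (w i) (rho i x y).
Let S x y := [set r : R | r = 0 \/ exists i, r = c i x y].
Let D x y := sup (S x y).

Let w_gt0 i : 0 < w i. Proof. by rewrite invr_gt0 ltr0Sn. Qed.
Let w_le1 i : w i <= 1. Proof. by rewrite invf_le1 ?ltr0Sn // ler1n. Qed.
Let c_ge0 i x y : 0 <= c i x y. Proof. by rewrite le_min (ltW (w_gt0 i)) r0. Qed.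
Let S_ne x y : S x y !=set0. Proof. by exists 0; left. Qed.
Let S_ub x y : has_ubound (S x y).
Proof.
exists 1 => r [->|[i ->]]; first exact: ler01.
by rewrite ge_min w_le1.
Qed.
Let c_le_D i x y : c i x y <= D x y.
Proof. by rewrite /D; apply: ub_le_sup; [exact: S_ub|right; exists i]. Qed.
Let D_ge0 x y : 0 <= D x y.
Proof. by rewrite /D; apply: ub_le_sup; [exact: S_ub|left]. Qed.
Let D_le x y e : 0 <= e -> (forall i, c i x y <= e) -> D x y <= e.
Proof. by move=> e0 he; rewrite /D; apply: ge_sup; [exact: S_ne|move=> r [->|[i ->]]]. Qed.
Let D_sym x y : D x y = D y x.
Proof.
apply/le_anti/andP; split; apply: D_le => // i; rewrite /c rsym; exact: c_le_D.
Qed.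
Let D_tri x y z : D x z <= D x y + D y z.
Proof.
apply: D_le; first by rewrite addr_ge0.
move=> i; apply: le_trans (lerD (c_le_D i x y) (c_le_D i y z)).
apply: min_tri; [exact: ltW|exact: r0|exact: r0|exact: rtri].
Qed.
Let D_xx x : D x x = 0.
Proof.
apply/le_anti/andP; split => //; apply: D_le => // i.
by rewrite /c rxx ge_min lexx orbT.
Qed.

Let Dnb x : nbhs x = filter_from [set e | 0 < e] (fun e => [set y | D x y < e]).
Proof.
rewrite eqEsubset; split => A.
- move=> nA.
  pose B e := [set y | D x y < e].
  have FF : Filter (filter_from [set e : R | 0 < e] B).
    apply: filter_from_filter; first by exists 1; exact: ltr01.
    move=> i j /= i0 j0; exists (Order.min i j); first by rewrite /= lt_min i0.
    by move=> y /=; rewrite /B /= lt_min => /andP[].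
  have PF : ProperFilter (filter_from [set e : R | 0 < e] B).
    apply: filter_from_proper => // e e0; exists x; by rewrite /B /= D_xx.
  have cl : cluster (filter_from [set e : R | 0 < e] B) = [set x].
    rewrite eqEsubset; split => y; last first.
      move=> -> U V [e e0 sU] nV; exists x; split; last exact: nbhs_singleton.
      by apply: sU; rewrite /B /= D_xx.
    move=> cy; apply/esym; apply: rsep => i; apply: contrapT => ne.
    have dl : 0 < rho i x y by rewrite lt_neqAle eq_sym r0 andbT; apply/eqP.
    pose d := rho i x y / 2.
    have d0 : 0 < d by rewrite divr_gt0.
    have hB : filter_from [set e : R | 0 < e] B (B (Order.min (w i) d)).
      by exists (Order.min (w i) d) => //; rewrite /= lt_min w_gt0 d0.
    have [z [Bz Vz]] := cy _ [set z | rho i y z < d] hB (rnb i y d0).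
    have rz : rho i x z < d.
      move: (le_lt_trans (c_le_D i x z) Bz); rewrite /c !lt_min => /andP[h1 h2].
      move: h1 h2; rewrite /Order.min; case: ifP => _; first by rewrite ltxx.
      by move=> _ h.
    have := rtri i x z y; rewrite (rsym i z y).
    move=> /le_lt_trans /(_ (ltrD rz Vz)); rewrite /d -splitr ltxx //.
  have := compact_cluster_set1 hK cK (@filterT _ _ _) PF (@filterT _ _ FF) cl.
  by move=> /(_ (nbhs_filter x)) /(_ A nA) [e e0 sA]; exists e.
- move=> [e e0 sA]; suff : nbhs x [set y | D x y < e] by apply: filterS.
  pose N := Num.truncn (2 / e).
  have e20 : 0 < e / 2 by rewrite divr_gt0.
  pose Q n := [set y | forall i, (pickle i < n)%N -> rho i x y < e / 2].
  have nQ n : nbhs x (Q n).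
    elim: n => [|n IH].
      by apply: filterS (@filterT _ _ _) => y _ i.
    pose B := if (pickle_inv n : option I) is Some i0 then [set y | rho i0 x y < e / 2] else setT.
    have nB : nbhs x B by rewrite /B; case: (pickle_inv n) => [i0|]; [exact: rnb|exact: filterT].
    apply: filterS (filterI IH nB) => y [Qy By] i; rewrite ltnS leq_eqVlt => /orP[/eqP pi|]; last exact: Qy.
    by move: By; rewrite /B -pi pickleK_inv.
  apply: (filterS _ (nQ N)) => y Qy /=.
  apply: le_lt_trans (_ : e / 2 < e); last by rewrite ltr_pdivrMr // ltr_pMr // ltr1n.
  apply: D_le; first exact: ltW.
  move=> i; have [lt|ge] := ltnP (pickle i) N.
    by rewrite ge_min (ltW (Qy i lt)) orbT.
  rewrite ge_min; apply/orP; left.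
  rewrite /w; apply: le_trans (_ : N.+1%:R^-1 <= _).
    by rewrite lef_pV2 ?posrE ?ltr0Sn // ler_nat ltnS.
  apply: ltW; rewrite -[e / 2]invrK ltf_pV2 ?posrE ?invr_gt0 ?ltr0Sn //.
  by rewrite invf_div; exact: truncnS_gt.
Qed.

Lemma metrize_crit : metrizable R K.
Proof.
exists D; split; [exact: D_ge0| |exact: D_sym|exact: D_tri|move=> x; exact: Dnb].
move=> x y; split; last by move=> ->.
move=> Dxy; apply: hK => U V nU nV.
have := nU; rewrite Dnb => -[e e0 sU].
exists y; split; last exact: nbhs_singleton.
by apply: sU; rewrite /= Dxy.
Qed.
End Crit.
Section DZ.
Context {R : realType} {Z : pseudoMetricType R}.
Definition dZ (z w : Z) : R := inf [set e : R | 0 < e /\ (1 <= e \/ ball z e w)].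

Let dZ_ne (z w : Z) : [set e : R | 0 < e /\ (1 <= e \/ ball z e w)] !=set0.
Proof. by exists 1; split; [exact: ltr01|left]. Qed.
Let dZ_lb (z w : Z) : has_lbound [set e : R | 0 < e /\ (1 <= e \/ ball z e w)].
Proof. by exists 0 => e [e0 _]; exact: ltW. Qed.

Lemma dZ_ge0 z w : 0 <= dZ z w.
Proof. by apply: lb_le_inf => // e [e0 _]; exact: ltW. Qed.

Lemma dZ_le z w e : 0 < e -> ball z e w -> dZ z w <= e.
Proof. by move=> e0 b; apply: ge_inf => //; split => //; right. Qed.

Lemma dZ_lt z w e : e <= 1 -> dZ z w < e -> ball z e w.
Proof.
move=> e1 /(inf_lt (dZ_ne z w)) [y [y0 [y1|b]] ye].
  by move: (le_lt_trans y1 (lt_le_trans ye e1)); rewrite ltxx.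
exact: le_ball (ltW ye) _ b.
Qed.

Lemma dZ_sym z w : dZ z w = dZ w z.
Proof.
suff h : forall z w, dZ z w <= dZ w z by apply/le_anti; rewrite !h.
move=> a b; apply: lb_le_inf => // e [e0 h]; apply: ge_inf => //; split => //.
by case: h => [|/ball_sym]; [left|right].
Qed.

Lemma dZ_tri z y w : dZ z w <= dZ z y + dZ y w.
Proof.
apply/ler_addgt0Pr => e e0.
have e20 : 0 < e / 2 by rewrite divr_gt0.
have [e1 [e10 h1] l1] := inf_adherent e20 (conj (dZ_ne z y) (dZ_lb z y)).
have [e2 [e20' h2] l2] := inf_adherent e20 (conj (dZ_ne y w) (dZ_lb y w)).
apply: le_trans (_ : e1 + e2 <= _).
  apply: ge_inf => //; split; first by rewrite addr_gt0.
  case: h1 => [h1|b1]; first by left; rewrite (le_trans h1) // lerDl ltW.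
  case: h2 => [h2|b2]; first by left; rewrite (le_trans h2) // lerDr ltW.
  by right; exact: ball_triangle b1 b2.
rewrite [e in _ <= _ + e]splitr addrACA; apply: ltW; exact: ltrD.
Qed.

Lemma dZ_xx z : dZ z z = 0.
Proof.
apply/le_anti; rewrite dZ_ge0 andbT; apply/ler_addgt0Pr => e e0.
by rewrite add0r; apply: dZ_le => //; exact: ballxx.
Qed.

Lemma dZ_nbhs z e : 0 < e -> nbhs z [set w | dZ z w < e].
Proof.
move=> e0; have e20 : 0 < e / 2 by rewrite divr_gt0.
have := nbhsx_ballx z (e / 2) e20; apply: filterS => w b /=.
apply: le_lt_trans (dZ_le e20 b) _.
by rewrite ltr_pdivrMr // ltr_pMr // ltr1n.
Qed.

Lemma dZ_eq0 : hausdorff_space Z -> forall z w, dZ z w = 0 -> z = w.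
Proof.
move=> hZ z w d0; apply: hZ => A B nA nB.
move/nbhs_ballP: nA => [e /= e0 sA].
exists w; split; last exact: nbhs_singleton.
apply: sA; apply: (@le_ball _ _ z (Order.min e 1) e); first by rewrite ge_min lexx.
apply: dZ_lt; first by rewrite ge_min lexx orbT.
by rewrite d0 lt_min e0 ltr01.
Qed.
End DZ.
Section FS.
Context {X Y : topologicalType} {Z : uniformType}.

Lemma eval_cont (p : X * Y) : continuous (fun s : cross_uniform X Y Z => s p).
Proof.
move=> s W /= nW.
move/nbhsP: nW => [E entE sW].
have := @fam_nbhs _ _ (@crosses X Y) (cross p) E s entE (ex_intro _ p erefl).
apply: filterS => g /= h; apply: sW; apply/xsectionP; apply: h; by left.
Qed.

Lemma cross_hausdorff : hausdorff_space Z -> hausdorff_space (cross_uniform X Y Z).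
Proof.
move=> hZ s t cst; apply: funext => p; apply: hZ => A B nA nB.
have [g [Ag Bg]] := cst _ _ (eval_cont (p:=p) nA) (eval_cont (p:=p) nB).
by exists (g p).
Qed.
End FS.

Lemma compact_emb (A B : topologicalType) (f : A -> B) : compact [set: A] ->
  hausdorff_space B -> injective f -> continuous f -> embedding f.
Proof.
move=> cA hB fi fc; split => // U oU.
exists (~` (f @` (~` U))); split.
  apply: closed_openC; apply: compact_closed hB _.
  apply: continuous_compact; first exact: continuous_subspaceT.
  apply: subclosed_compact cA _ => //; exact: open_closedC.
apply/seteqP; split.
- move=> _ [a Ua <-]; split; first by exists a.
  by move=> [a' nUa' /fi e]; apply: nUa'; rewrite e.
- move=> _ [[a _ <-] nf]; exists a => //; apply: contrapT => nUa; apply: nf; by exists a.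
Qed.

Lemma tube {R : realType} (K T : topologicalType) (Z : pseudoMetricType R) (F : K -> T -> Z) :
  compact [set: T] -> continuous (fun p : K * T => F p.1 p.2) ->
  forall k e, 0 < e -> \forall k' \near k, forall x, ball (F k x) e (F k' x).
Proof.
move=> cT Fc k e e0.
have e20 : 0 < e / 2 by rewrite divr_gt0.
suff : \forall k' \near k, [set: T] `<=` (fun x => ball (F k x) e (F k' x)).
  by apply: filterS => k' h x; exact: h.
apply: ((compact_near_coveringP _).1 cT) => x _.
have [[P Q] [Pk Qx] PQ] : nbhs (k, x) [set p : K * T | ball (F k x) (e/2) (F p.1 p.2)].
  by apply: Fc; exact: nbhsx_ballx.
exists (Q, P) => //= -[x' k'] /= [Qx' Pk'].
apply: (@ball_splitl _ _ (F k x)); apply: ball_sym.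
  by apply: (PQ (k, x')); split => //; exact: nbhs_singleton.
by apply: (PQ (k', x')).
Qed.

Lemma cont_into_cross {R : realType} (K X Y : topologicalType) (Z : pseudoMetricType R)
  (f : K -> cross_uniform X Y Z) :
  (forall k e, 0 < e -> \forall k' \near k, forall p, ball (f k p) e (f k' p)) -> continuous f.
Proof.
move=> h k; apply/fam_cvgP => A _.
apply: (@uniform_subset_cvg _ _ _ setT) => //.
move=> P /uniform_nbhs [E [entE sP]].
move: entE; rewrite -entourage_ballE => -[e /= e0 sE].
apply: (filterS _ (h k e e0)) => k' hk'; apply: sP => p _; apply: sE; exact: hk'.
Qed.
Lemma dense_eq {R : realType} (T Z : topologicalType) (d : T -> T -> R)
  (dnb : forall x, nbhs x = filter_from [set e | 0 < e] (fun e => [set y | d x y < e]))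
  (a : nat -> T) (ad : forall x e, 0 < e -> exists n, d x (a n) < e) (h1 h2 : T -> Z) :
  hausdorff_space Z -> continuous h1 -> continuous h2 ->
  (forall n, h1 (a n) = h2 (a n)) -> forall x, h1 x = h2 x.
Proof.
move=> hZ c1 c2 e x; apply: hZ => A B nA nB.
have n1 : nbhs x (h1 @^-1` A) := c1 x _ nA.
have n2 : nbhs x (h2 @^-1` B) := c2 x _ nB.
have nI : nbhs x (h1 @^-1` A `&` h2 @^-1` B) by apply: filterI.
move: nI; rewrite dnb => -[r r0 sr].
have [n dn] := ad x r r0.
have [hA hB] := sr (a n) dn.
by exists (h1 (a n)); split => //; rewrite e.
Qed.

Lemma nonempty_inf (T : Type) : infinite_set [set: T] -> exists x : T, True.
Proof.
move=> inf; apply: contrapT => h; apply: inf.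
rewrite (_ : [set: T] = set0); first exact: finite_set0.
by apply/seteqP; split => // x _; apply: h; exists x.
Qed.

Lemma acc_point {R : realType} (T : topologicalType) (d : T -> T -> R)
  (d0 : forall x y, 0 <= d x y) (dxx : forall x y, d x y = 0 <-> x = y)
  (dsym : forall x y, d x y = d y x) (dtri : forall x y z, d x z <= d x y + d y z)
  (dnb : forall x, nbhs x = filter_from [set e | 0 < e] (fun e => [set y | d x y < e])) :
  compact [set: T] -> infinite_set [set: T] ->
  exists xi : T, forall e, 0 < e -> exists y, 0 < d xi y /\ d xi y < e.
Proof.
move=> cT inf; have [x0 _] := nonempty_inf inf.
apply: contrapT => H.
have H' : forall x, exists e : R, 0 < e /\ forall y, d x y < e -> y = x.
  move=> x; apply: contrapT => nex; apply: H; exists x => e e0.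
  apply: contrapT => ny; apply: nex; exists e; split => // y dy.
  apply: contrapT => yx; apply: ny; exists y; split => //.
  rewrite lt_neqAle d0 andbT; apply/eqP => /esym /dxx; exact/nesym.
have [ex exP] := choice H'.
have h := @compact_cover (ptd_of x0).
have : @cover_compact (ptd_of x0) setT by rewrite -h.
move=> /(_ T setT (fun x => [set y | d x y < ex x])).
case.
- by move=> i _; apply: (mball_open dtri dnb).
- move=> x _; exists x => //=; rewrite (proj2 (dxx x x) erefl); exact: (proj1 (exP x)).
move=> D' _ cov; apply: inf.
apply: (sub_finite_set _ (finite_fset D')) => y _.
have [x /= xD dxy] := cov y I.
by have -> := (proj2 (exP x)) y dxy.
Qed.

From mathcomp Require Import lra.

Lemma sep_seq {R : realType} (T : Type) (u : T -> R) :
  (forall e, 0 < e -> exists y, 0 < u y /\ u y < e) ->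
  exists xs : nat -> T, (forall n, 0 < u (xs n) /\ u (xs n) < 1) /\
    (forall n m, n != m -> u (xs n) / 2 < `|u (xs n) - u (xs m)|).
Proof.
move=> H.
have [y0 _] := H 1 ltr01.
have H' : forall e : R, exists y, 0 < e -> 0 < u y /\ u y < e.
  move=> e; have [e0|e0] := ltP 0 e.
    by have [y hy] := H e e0; exists y.
  by exists y0.
have [ch chP] := choice H'.
pose xs n := iter n (fun y => ch (u y / 2)) (ch 1).
have pos n : 0 < u (xs n) /\ u (xs n) < 1.
  elim: n => [|n [IH1 IH2]]; first exact: chP ltr01.
  have := chP (u (xs n) / 2) (ltac:(by rewrite divr_gt0)).
  rewrite /xs iterS -/(xs n) => -[h1 h2]; split => //; lra.
have step n : u (xs n.+1) < u (xs n) / 2.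
  have := chP (u (xs n) / 2) (ltac:(by rewrite divr_gt0 ?(proj1 (pos n)))).
  by rewrite /xs iterS -/(xs n) => -[].
have mono n k : u (xs (n + k)%N) <= u (xs n).
  elim: k => [|k IH]; first by rewrite addn0.
  rewrite addnS; apply: le_trans IH; have := step (n + k)%N; have := pos (n + k)%N; lra.
exists xs; split => // n m nm.
have [nm'|mn|e] := ltngtP n m; last by rewrite e eqxx in nm.
- have := mono n.+1 (m - n.+1)%N; rewrite subnKC // => hm.
  have := step n; have := pos n; have := pos m.
  rewrite ltr_normr; move=> *; apply/orP; left; lra.
- have := mono m.+1 (n - m.+1)%N; rewrite subnKC // => hm.
  have := step m; have := pos n; have := pos m.
  rewrite ltr_normr; move=> *; apply/orP; right; lra.
Qed.
Section Phi.
Context {R : realType} {K T : topologicalType} (dK : K -> K -> R) (dT : T -> T -> R).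
Hypotheses (dK0 : forall x y, 0 <= dK x y) (dKxx : forall x, dK x x = 0)
  (dKsym : forall x y, dK x y = dK y x) (dKtri : forall x y z, dK x z <= dK x y + dK y z)
  (dKnb : forall x, nbhs x = filter_from [set e | 0 < e] (fun e => [set y | dK x y < e])).
Hypotheses (dT0 : forall x y, 0 <= dT x y) (dTxx : forall x, dT x x = 0)
  (dTsym : forall x y, dT x y = dT y x) (dTtri : forall x y z, dT x z <= dT x y + dT y z)
  (dTnb : forall x, nbhs x = filter_from [set e | 0 < e] (fun e => [set y | dT x y < e])).
Variables (q : nat -> K) (xs : nat -> T) (w : nat -> R).
Hypotheses (w0 : forall n, 0 < w n) (w1 : forall n, w n <= 1)
  (wsep : forall n m, n != m -> 2 * w n <= dT (xs n) (xs m)).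

Definition cK k k' := Order.min 1 (dK k k').
Definition term n k x := dT x (xs n) + w n * cK k (q n).
Definition Phi k x := inf (range (fun n => term n k x)).

Lemma cK_ge0 k k' : 0 <= cK k k'.
Proof. by rewrite le_min ler01 dK0. Qed.
Lemma cK_le1 k k' : cK k k' <= 1.
Proof. by rewrite ge_min lexx. Qed.

Lemma cK_lip k k' p : cK k p <= cK k' p + dK k k'.
Proof.
have h1 := dKtri k k' p; have h2 := dK0 k k'; have h3 := dK0 k' p; have h4 := dK0 k p.
rewrite /cK /Order.min; have [a|a] := ltP 1 (dK k p); have [b|b] := ltP 1 (dK k' p); lra.
Qed.

Lemma term_ge0 n k x : 0 <= term n k x.
Proof. by rewrite addr_ge0 // mulr_ge0 ?cK_ge0 // ltW. Qed.

Lemma Phi_le n k x : Phi k x <= term n k x.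
Proof.
apply: ge_inf; last by exists n.
by exists 0 => _ [m _ <-]; exact: term_ge0.
Qed.

Lemma Phi_lip k x k' x' : Phi k x <= Phi k' x' + (dT x x' + dK k k').
Proof.
rewrite -lerBlDr; apply: lb_le_inf; first by exists (term 0 k' x'), 0%N.
move=> _ [n _ <-]; rewrite lerBlDr; apply: le_trans (Phi_le n k x) _.
rewrite /term.
have h1 := dTtri x x' (xs n); have h2 := cK_lip k k' (q n); have h3 := w1 n;
have h4 := ltW (w0 n); have h5 := dK0 k k'; have h6 := cK_ge0 k' (q n).
nra.
Qed.

Lemma Phi_at n k : Phi k (xs n) = w n * cK k (q n).
Proof.
apply/le_anti/andP; split.
  by apply: le_trans (Phi_le n k (xs n)) _; rewrite /term dTxx add0r.
apply: lb_le_inf; first by exists (term 0 k (xs n)), 0%N.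
move=> _ [m _ <-]; rewrite /term.
have [->|nm] := eqVneq n m; first by rewrite dTxx add0r.
have h1 := wsep nm; have h2 := cK_le1 k (q n); have h3 := w0 n;
have h4 := cK_ge0 k (q m); have h5 := w0 m; have h6 := cK_ge0 k (q n).
nra.
Qed.

Lemma Phi_cont : continuous (fun p : K * T => Phi p.1 p.2).
Proof.
move=> [k x] S /nbhs_ballP [e /= e0 sS].
have e20 : 0 < e / 2 by rewrite divr_gt0.
exists ([set k' | dK k k' < e / 2], [set x' | dT x x' < e / 2]).
  by split; [rewrite dKnb; exists (e / 2)|rewrite dTnb; exists (e / 2)].
move=> [k' x'] /= [hk hx]; apply: sS; rewrite -ball_normE /=.
have h1 := Phi_lip k x k' x'; have h2 := Phi_lip k' x' k x.
rewrite (dKsym k' k) (dTsym x' x) in h2.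
rewrite ltr_norml; apply/andP; split; lra.
Qed.

Lemma Phi_cont_x k : continuous (Phi k).
Proof.
move=> x S /nbhs_ballP [e /= e0 sS].
rewrite dTnb; exists e => // x' /= hx; apply: sS; rewrite -ball_normE /=.
have h1 := Phi_lip k x k x'; have h2 := Phi_lip k x' k x.
rewrite dKxx (dTsym x' x) in h1 h2.
rewrite ltr_norml; apply/andP; split; lra.
Qed.
End Phi.
Unset Implicit Arguments.
Set Strict Implicit.
Theorem corollary7p2 (R : realType) (X Y : topologicalType)
  (Z : pseudoMetricType R) :
  compact [set: X] -> hausdorff_space X -> metrizable R X -> infinite_set [set: X] ->
  compact [set: Y] -> hausdorff_space Y -> metrizable R Y -> infinite_set [set: Y] ->
  hausdorff_space Z ->
  (exists g : R -> Z, embedding g) ->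
  forall K : topologicalType, compact [set: K] -> hausdorff_space K ->
    (embeds_into K (Ssep X Y Z) <-> metrizable R K).
Proof.
move=> cX hX mX infX cY hY mY infY hZ [g [ginj gc _]] K cpK hK.
have [dX [dX0 dXxx dXsym dXtri dXnb]] := mX.
have [dY [dY0 dYxx dYsym dYtri dYnb]] := mY.
have [x0 _] := nonempty_inf infX.
have [y0 _] := nonempty_inf infY.
have [aX aXd] := dense_seq dXxx dXsym dXtri dXnb x0 cX.
have [aY aYd] := dense_seq dYxx dYsym dYtri dYnb y0 cY.
split.
- move=> [f [fS [finj fc _]]].
  pose pt (i : nat * nat) := (aX i.1, aY i.2).
  pose rho (i : nat * nat) (k k' : K) := dZ (f k (pt i)) (f k' (pt i)).
  apply: (@metrize_crit R K _ rho cpK hK).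
  + by move=> i x y; exact: dZ_ge0.
  + by move=> i x; exact: dZ_xx.
  + by move=> i x y; exact: dZ_sym.
  + by move=> i x y z; exact: dZ_tri.
  + move=> i k e e0.
    have := dZ_nbhs (f k (pt i)) e0.
    by move=> /(@eval_cont X Y Z (pt i) (f k)) /(fc k).
  + move=> k k' h.
    apply: finj.
    have e1 : forall n m, f k (aX n, aY m) = f k' (aX n, aY m).
      by move=> n m; apply: (dZ_eq0 hZ); exact: (h (n, m)).
    have e2 : forall n y, f k (aX n, y) = f k' (aX n, y).
      move=> n; apply: (dense_eq dYnb aYd hZ (h1 := fun y => f k (aX n, y)) (h2 := fun y => f k' (aX n, y))).
      - exact: (fS k).1 (aX n).
      - exact: (fS k').1 (aX n).
      - move=> m; exact: e1.
    apply: funext => -[x y].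
    apply: (dense_eq dXnb aXd hZ (h1 := fun x => f k (x, y)) (h2 := fun x => f k' (x, y))).
    + exact: (fS k).2 y.
    + exact: (fS k').2 y.
    + by move=> n; exact: e2.
- move=> [dK [dK0 dKxx dKsym dKtri dKnb]].
  have dKxx0 : forall k, dK k k = 0 by move=> k; exact/dKxx.
  have dXxx0 : forall x, dX x x = 0 by move=> x; exact/dXxx.
  have [xi xiP] := acc_point dX0 dXxx dXsym dXtri dXnb cX infX.
  have [xs [xsP xsS]] := sep_seq xiP.
  pose w n := dX xi (xs n) / 4.
  have w0 n : 0 < w n by rewrite divr_gt0 // (proj1 (xsP n)).
  have w1 n : w n <= 1 by have := xsP n; rewrite /w; lra.
  have wsep n m : n != m -> 2 * w n <= dX (xs n) (xs m).
    move=> nm; have := xsS n m nm.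
    have : `|dX xi (xs n) - dX xi (xs m)| <= dX (xs n) (xs m).
      have := dXtri xi (xs n) (xs m); have := dXtri xi (xs m) (xs n).
      rewrite (dXsym (xs m) (xs n)) ler_norml; move=> *; apply/andP; split; lra.
    rewrite /w; lra.
  case: (pselect (exists k : K, True)) => [[k0 _]|nK]; last first.
    exists (fun _ => (fun _ => g 0)); split.
      by move=> k; exfalso; apply nK; exists k.
    split.
    + by move=> k; exfalso; apply nK; exists k.
    + by move=> k; exfalso; apply nK; exists k.
    + move=> U _; exists setT; split; first exact: openT.
      by apply/seteqP; split => z; [move=> [k _ _]|move=> [[k _ _] _]]; exfalso; apply nK; exists k.
  have [q qd] := dense_seq dKxx dKsym dKtri dKnb k0 cpK.
  pose P := Phi dK dX q xs w.
  pose f (k : K) : cross_uniform X Y Z := fun p => g (P k p.1).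
  have Pc : continuous (fun p : K * X => g (P p.1 p.2)).
    move=> p; apply: (continuous_comp (f := fun p : K * X => P p.1 p.2) (g := g)).
      exact: (Phi_cont dK0 dKsym dKtri dKnb dX0 dXsym dXtri dXnb w0 w1).
    exact: gc.
  exists f; split.
    move=> k; split.
      by move=> x; exact: (@cst_continuous Y Z (g (P k x))).
    move=> y x; apply: (continuous_comp (f := P k) (g := g)).
      exact: (Phi_cont_x dK0 dKxx0 dKtri dX0 dXsym dXtri dXnb w0 w1).
    exact: gc.
  apply: compact_emb => //.
  + exact: cross_hausdorff.
  + move=> k1 k2 e.
    have eP : forall x, P k1 x = P k2 x.
      by move=> x; apply: ginj; exact: (congr1 (fun s => s (x, y0)) e).
    have ec : forall n, cK dK k1 (q n) = cK dK k2 (q n).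
      move=> n; have := eP (xs n); rewrite /P !(Phi_at dK0 dX0 dXxx0 q w0 wsep).
      by move/(mulfI (lt0r_neq0 (w0 n))).
    apply/dKxx; apply/le_anti; rewrite dK0 andbT.
    apply/ler_addgt0Pr => e' e0; rewrite add0r.
    pose e2 := Order.min 1 (e' / 2).
    have e20 : 0 < e2 by rewrite lt_min ltr01 divr_gt0.
    have e21 : e2 <= 1 by rewrite ge_min lexx.
    have e2e : e2 <= e' / 2 by rewrite ge_min lexx orbT.
    have [n hn] := qd k1 e2 e20.
    have h1 : cK dK k1 (q n) < e2.
      by apply: le_lt_trans hn; rewrite ge_min lexx orbT.
    have h2 : dK k2 (q n) < e2.
      move: h1; rewrite ec /cK gt_min => /orP[h|//].
      by move: (lt_le_trans h e21); rewrite ltxx.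
    have := dKtri k1 (q n) k2; rewrite (dKsym (q n) k2); lra.
  + apply: cont_into_cross => k e e0.
    have := @tube R K X Z (fun k x => g (P k x)) cX Pc k e e0.
    by apply: filterS => k' h [x y]; exact: h x.
Qed.
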